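(* Let $X$ and $Y$ be $n\times n$ positive semidefinite Hermitian matrices whose Thompson metric $d=d_T(X,Y)$ is finite. Then $$\|X-Y\|_2\;\le\;\frac{e^d-1}{\sqrt{e^{2d}+1}}\sqrt{\|X\|_2^2+\|Y\|_2^2}\;\le\;2^{\frac12}\,\frac{e^d-1}{\sqrt{e^{2d}+1}}\,\max\big[\|X\|_2,\|Y\|_2\big],$$ where $\|\cdot\|_2$ is the Frobenius norm.
   Context: For Hermitian matrices $A,B$, write $A\le B$ (Löwner order) if $B-A$ is positive semidefinite. For positive semidefinite $X,Y$, the Thompson metric is $d_T(X,Y)=\inf\{\log\alpha:\ \alpha\ge1,\ X\le\alpha Y,\ Y\le\alpha X\}$, with $d_T(X,Y)=+\infty$ if no such $\alpha$ exists. Equivalently, $d_T(X,Y)=\log\max\{M(X/Y),M(Y/X)\}$, where $M(X/Y)=\inf\{\lambda>0:X\le\lambda Y\}$. The Frobenius norm is $\|A\|_2=\sqrt{\operatorname{tr}(A^*A)}$, the Schatten $2$-norm. *)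

(* Defs.v *)
From HB Require Import structures.
From mathcomp Require Import all_boot all_order all_algebra.
From mathcomp Require Import sesquilinear spectral.
From mathcomp Require Import complex.
From mathcomp Require Import all_classical all_reals all_analysis.
Set Implicit Arguments. Unset Strict Implicit. Unset Printing Implicit Defensive.
Import Order.TTheory GRing.Theory Num.Theory Num.Def.
Local Open Scope ring_scope.
Local Open Scope classical_set_scope.
Local Open Scope sesquilinear_scope.

Definition hermitianmx (R : realType) (n : nat) (A : 'M[R[i]]_n) : Prop :=
  A^t conjC = A.

(* Positive semidefinite: Hermitian and v A v^* >= 0 for every row vector v
   (in R[i], 0 <= z means z is a nonnegative real). *)
Definition psdmx (R : realType) (n : nat) (A : 'M[R[i]]_n) : Prop :=
  hermitianmx A /\ forall v : 'rV[R[i]]_n, 0 <= (v *m A *m v^t conjC) 0 0.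

Definition loewner_le (R : realType) (n : nat) (A B : 'M[R[i]]_n) : Prop :=
  psdmx (B - A).

Definition thompson (R : realType) (n : nat) (X Y : 'M[R[i]]_n) : \bar R :=
  ereal_inf [set ((ln alpha)%:E : \bar R) | alpha in
    [set alpha : R | 1 <= alpha /\
       loewner_le X ((alpha%:C)%C *: Y) /\ loewner_le Y ((alpha%:C)%C *: X)]].

(* Frobenius norm ||A||_2 = sqrt (tr (A^* A)); the trace is a nonnegative real,
   so we take its real part. *)
Definition frob (R : realType) (n : nat) (A : 'M[R[i]]_n) : R :=
  Num.sqrt (complex.Re (\tr (A^t conjC *m A))).

(* Main.v *)
Require Import Defs.
From HB Require Import structures.
From mathcomp Require Import all_boot all_order all_algebra.
From mathcomp Require Import sesquilinear spectral.
From mathcomp Require Import complex.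
From mathcomp Require Import all_classical all_reals all_analysis.
Import Order.TTheory GRing.Theory Num.Theory Num.Def.
Local Open Scope ring_scope.
Local Open Scope sesquilinear_scope.
From mathcomp Require Import lra ring.
Set Implicit Arguments. Unset Strict Implicit.
Lemma psd_quad (R : realType) n (A : 'M[R[i]]_n) (P : 'M[R[i]]_n) i :
  psdmx A -> 0 <= (P *m A *m P^t*) i i.
Proof.
case=> _ /(_ (row i P)) H.
have -> : (P *m A *m P^t*) i i = (row i P *m A *m (row i P)^t*) 0 0.
  rewrite !mxE; apply: eq_bigr => k _; rewrite !mxE.
  congr (_ * _); apply: eq_bigr => l _; by rewrite !mxE.
exact: H.
Qed.

Lemma psd_tr (R : realType) n (A B : 'M[R[i]]_n) :
  psdmx A -> psdmx B -> 0 <= \tr (A *m B).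
Proof.
move=> hA hB.
have hn : A \is normalmx by rewrite qualifE hA.1.
have /orthomx_spectralP EA := hn.
set P := spectralmx A in EA.
have PU : P \is unitarymx := spectral_unitarymx A.
rewrite invmx_unitary // in EA.
have PP : P *m P^t* = 1%:M by apply/unitarymxP.
have PP' : P^t* *m P = 1%:M.
  have Pu : P \in unitmx := unitarymx_unit PU.
  by rewrite -(invmx_unitary PU) mulVmx.
set D := spectral_diag A in EA.
have DE : diag_mx D = P *m A *m P^t*.
  by rewrite EA !mulmxA PP mul1mx -mulmxA PP mulmx1.
rewrite EA -!mulmxA mxtrace_mulC -!mulmxA.
rewrite mul_diag_mx /mxtrace; apply: sumr_ge0 => j _; rewrite mxE.
apply: mulr_ge0.
  have := @psd_quad _ _ A P j hA; by rewrite -DE mxE eqxx mulr1n.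
rewrite !mulmxA. exact: psd_quad.
Qed.
Lemma real_lim (R : realType) (S : R -> Prop) a0 a b : 0 <= a ->
  (forall d, 0 < d -> exists al, S al /\ al < a0 + d) ->
  (forall al, S al -> b <= a * al) -> b <= a * a0.
Proof.
move=> a0' H1 H2; apply/ler_addgt0Pr => e e0.
have ha : 0 < a + 1 by lra.
have [al [Sal lt]] := H1 (e / (a + 1)) (divr_gt0 e0 ha).
have := H2 _ Sal.
have : a * (e / (a + 1)) <= e.
  rewrite mulrA ler_pdivrMr //; nra.
move=> h1 h2; nra.
Qed.

Lemma cplx_lim (R : realType) (S : R -> Prop) a0 (q p : R[i]) : 0 <= q ->
  (forall d, 0 < d -> exists al, S al /\ al < a0 + d) ->
  (forall al, S al -> 0 <= (al%:C)%C * q - p) -> 0 <= (a0%:C)%C * q - p.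
Proof.
case: q => q1 q2; case: p => p1 p2 => hq H1 H2.
move: hq; rewrite lecE /= => /andP [/eqP hq2 hq1]; subst q2.
have H3 : forall al, S al -> p1 <= q1 * al /\ p2 = 0.
  move=> al /H2; rewrite lecE /= => /andP [/eqP h1 h2]; split.
    rewrite mulrC; lra.
  lra.
have [al [Sal _]] := H1 1 ltr01.
have p20 := (H3 _ Sal).2.
rewrite lecE /=; apply/andP; split.
  apply/eqP; rewrite p20; lra.
rewrite -subr_ge0.
have := @real_lim _ S a0 q1 p1 hq1 H1 (fun al h => (H3 al h).1).
lra.
Qed.

Lemma quadE (R : realType) n (X Y : 'M[R[i]]_n) (a : R) (v : 'rV[R[i]]_n) :
  (v *m ((a%:C)%C *: Y - X) *m v^t*) 0 0 =
  (a%:C)%C * (v *m Y *m v^t*) 0 0 - (v *m X *m v^t*) 0 0.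
Proof. by rewrite mulmxBr mulmxBl -scalemxAr -scalemxAl !mxE. Qed.

Lemma herm_comb (R : realType) n (X Y : 'M[R[i]]_n) (a : R) :
  @Defs.hermitianmx R n X -> @Defs.hermitianmx R n Y -> @Defs.hermitianmx R n ((a%:C)%C *: Y - X).
Proof.
move=> hX hY; rewrite /Defs.hermitianmx.
apply/matrixP => i j; rewrite !mxE rmorphB rmorphM /=.
have -> : conjC (Y j i) = Y i j by rewrite -{2}hY !mxE.
have -> : conjC (X j i) = X i j by rewrite -{2}hX !mxE.
congr (_ * _ - _).
by rewrite conj_Creal // complex_real.
Qed.

Lemma loew_lim (R : realType) n (X Y : 'M[R[i]]_n) (S : R -> Prop) a0 :
  psdmx X -> psdmx Y ->
  (forall d, 0 < d -> exists al, S al /\ al < a0 + d) ->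
  (forall al, S al -> loewner_le X ((al%:C)%C *: Y)) ->
  loewner_le X ((a0%:C)%C *: Y).
Proof.
move=> hX hY H1 H2; split; first exact: herm_comb hX.1 hY.1.
move=> v; rewrite quadE; apply: (@cplx_lim _ S a0 _ _ (hY.2 v) H1).
by move=> al /H2 [_ /(_ v)]; rewrite quadE.
Qed.
Lemma fge0 (R : realType) (al : R) : 1 <= al ->
  0 <= (al - 1) / Num.sqrt (al ^+ 2 + 1).
Proof. move=> h; apply: divr_ge0; [lra | exact: sqrtr_ge0]. Qed.

Lemma final1 (R : realType) (al a b t : R) : 1 <= al -> 0 <= a -> 0 <= b ->
  al * (a + b) <= (al ^+ 2 + 1) * t ->
  Num.sqrt (a + b - 2 * t) <= (al - 1) / Num.sqrt (al ^+ 2 + 1) * Num.sqrt (a + b).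
Proof.
move=> h1 ha hb key.
have f0 := @fge0 _ _ h1.
have s0 : 0 < al ^+ 2 + 1 by nra.
rewrite -[X in _ <= X * _](ger0_norm f0) -sqrtr_sqr -sqrtrM ?sqr_ge0 //.
apply: ler_wsqrtr.
rewrite exprMn exprVn (sqr_sqrtr (ltW s0)) mulrAC ler_pdivlMr //.
nra.
Qed.

Lemma final2 (R : realType) (al x y : R) : 1 <= al -> 0 <= x -> 0 <= y ->
  (al - 1) / Num.sqrt (al ^+ 2 + 1) * Num.sqrt (x ^+ 2 + y ^+ 2)
     <= Num.sqrt 2 * ((al - 1) / Num.sqrt (al ^+ 2 + 1)) * Num.max x y.
Proof.
move=> h1 hx hy.
have f0 := @fge0 _ _ h1.
set f := (al - 1) / _. rewrite (mulrC (Num.sqrt 2) f) -(mulrA f); apply: (ler_wpM2l f0).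
have hM : 0 <= Num.max x y by rewrite le_max hx.
rewrite -[X in _ * X](ger0_norm hM) -sqrtr_sqr -sqrtrM //.
apply: ler_wsqrtr.
have : x <= Num.max x y by rewrite le_max lexx.
have : y <= Num.max x y by rewrite le_max lexx orbT.
nra.
Qed.

Lemma key_real (R : realType) (al : R) (A B T : R[i]) :
  0 <= (al%:C)%C * (al%:C)%C * T - (al%:C)%C * B - (al%:C)%C * A + T ->
  al * (complex.Re A + complex.Re B) <= (al ^+ 2 + 1) * complex.Re T.
Proof.
case: A => a1 a2; case: B => b1 b2; case: T => t1 t2.
rewrite lecE /= => /andP [_ h]; nra.
Qed.

Lemma Re_diff (R : realType) (A B T : R[i]) :
  complex.Re (A - T - (T - B)) = complex.Re A + complex.Re B - 2 * complex.Re T.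
Proof. case: A => a1 a2; case: B => b1 b2; case: T => t1 t2 /=; lra. Qed.

Lemma Re_ge0 (R : realType) (A : R[i]) : 0 <= A -> 0 <= complex.Re A.
Proof. by case: A => a1 a2; rewrite lecE /= => /andP [_ h]. Qed.

Lemma herm_sub (R : realType) n (X Y : 'M[R[i]]_n) :
  @Defs.hermitianmx R n X -> @Defs.hermitianmx R n Y -> (X - Y)^t* = X - Y.
Proof.
move=> hX hY; apply/matrixP => i j; rewrite !mxE rmorphB /=.
have -> : conjC (Y j i) = Y i j by rewrite -{2}hY !mxE.
by have -> : conjC (X j i) = X i j by rewrite -{2}hX !mxE.
Qed.

Theorem mainTheorem2 (R : realType) (n : nat) (X Y : 'M[R[i]]_n) (d : R) :
  psdmx X -> psdmx Y -> thompson X Y = d%:E ->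
  frob (X - Y) <= (expR d - 1) / Num.sqrt (expR (2 * d) + 1)
                   * Num.sqrt (frob X ^+ 2 + frob Y ^+ 2)
  /\ (expR d - 1) / Num.sqrt (expR (2 * d) + 1)
                   * Num.sqrt (frob X ^+ 2 + frob Y ^+ 2)
     <= Num.sqrt 2 * ((expR d - 1) / Num.sqrt (expR (2 * d) + 1))
        * Num.max (frob X) (frob Y).
Proof.
move=> hX hY hd.
pose S := fun al : R => 1 <= al /\ loewner_le X ((al%:C)%C *: Y)
                                 /\ loewner_le Y ((al%:C)%C *: X).
have lb : forall al, S al -> d <= ln al.
  move=> al Sal; have : (thompson X Y <= (ln al)%:E)%E.
    by apply: ereal_inf_lbound; exists al.
  by rewrite hd lee_fin.
have d0 : 0 <= d.
  have : (0%:E <= thompson X Y)%E.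
    apply: le_ereal_inf_tmp => _ [al [h1 _] <-]; rewrite lee_fin; exact: ln_ge0.
  by rewrite hd lee_fin.
have a01 : 1 <= expR d by rewrite -expR0 ler_expR.
have approx : forall e, 0 < e -> exists al, S al /\ al < expR d + e.
  move=> e he.
  have hp : 0 < expR d + e by rewrite addr_gt0 // expR_gt0.
  have : (thompson X Y < (ln (expR d + e))%:E)%E.
    by rewrite hd lte_fin -{1}(expRK d) ltr_ln ?posrE ?ltrDl // expR_gt0.
  case/ereal_inf_lt => _ [al Sal <-]; rewrite lte_fin => h.
  have al0 : 0 < al by have := Sal.1; lra.
  by exists al; split => //; rewrite -ltr_ln ?posrE.
have L1 := loew_lim hX hY approx (fun al h => h.2.1).
have L2 := loew_lim hY hX approx (fun al h => h.2.2).
have key := psd_tr L1 L2.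
have keyE : \tr (((expR d)%:C%C *: Y - X) *m ((expR d)%:C%C *: X - Y)) =
   (expR d)%:C%C * (expR d)%:C%C * \tr (X *m Y) - (expR d)%:C%C * \tr (Y *m Y)
   - (expR d)%:C%C * \tr (X *m X) + \tr (X *m Y).
  rewrite mulmxBl !mulmxBr -!scalemxAl -!scalemxAr !raddfB /= !linearZ /= (mxtrace_mulC Y X); ring.
rewrite keyE in key.
have kr := key_real key.
have ha := Re_ge0 (psd_tr hX hX).
have hb := Re_ge0 (psd_tr hY hY).
have fX : frob X = Num.sqrt (complex.Re (\tr (X *m X))) by rewrite /frob hX.1.
have fY : frob Y = Num.sqrt (complex.Re (\tr (Y *m Y))) by rewrite /frob hY.1.
have fXY : frob (X - Y) = Num.sqrt (complex.Re (\tr (X *m X)) + complex.Re (\tr (Y *m Y))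
                                    - 2 * complex.Re (\tr (X *m Y))).
  rewrite /frob (herm_sub hX.1 hY.1) mulmxBl !mulmxBr !raddfB /=.
  by rewrite (mxtrace_mulC Y X); congr (Num.sqrt _); ring.
have e2 : expR (2 * d) = expR d ^+ 2 by rewrite expRM_natl.
rewrite e2; split.
  rewrite fXY fX fY !sqr_sqrtr //; exact: final1.
apply: final2 => //; rewrite ?fX ?fY; exact: sqrtr_ge0.
Qed.
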